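(* Let $\lambda_1<\dots<\lambda_N$ be real and $u\in\mathbb{R}^N$ with $u_1^2,\dots,u_N^2\in(0,1)$ and $\sum_{i=1}^Nu_i^2=1$, and set $s_{\lambda,u}(l)=\sum_{i=1}^N\frac{u_i^2}{l-\lambda_i}$ for $l>\lambda_N$. Then $$\sup_{\alpha\in[-1,1]}\left|\sup_{\sigma\in\mathbb{R}^N:\,|\sigma|=1,\,\sigma\cdot u=\alpha}\sum_{i=1}^N\lambda_i\sigma_i^2-\inf_{l>\lambda_N}\left\{l-\frac{\alpha^2}{s_{\lambda,u}(l)}\right\}\right|\le2(\lambda_N-\lambda_1)\frac{u_N^2}{\sqrt{1-u_N^2}}.$$ *)

(* Defs.v *)
From HB Require Import structures.
From mathcomp Require Import all_boot all_order all_algebra.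
From mathcomp Require Import all_classical all_reals.
Set Implicit Arguments. Unset Strict Implicit. Unset Printing Implicit Defensive.
Import Order.TTheory GRing.Theory Num.Theory.
Local Open Scope ring_scope.
Local Open Scope classical_set_scope.

Definition s_lu (R : realType) (N : nat) (lam u : 'I_N -> R) (l : R) : R :=
  \sum_(i < N) u i ^+ 2 / (l - lam i).

Definition sup_part (R : realType) (N : nat) (lam u : 'I_N -> R) (alpha : R) : R :=
  sup [set x : R | exists sigma : 'I_N -> R,
         [/\ Num.sqrt (\sum_(i < N) sigma i ^+ 2) = 1,
             \sum_(i < N) sigma i * u i = alpha &
             x = \sum_(i < N) lam i * sigma i ^+ 2]].

Definition inf_part (R : realType) (N : nat) (lam u : 'I_N -> R) (lamN alpha : R) : R :=
  inf [set y : R | exists2 l : R, lamN < l & y = l - alpha ^+ 2 / s_lu lam u l].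

(* Main.v *)
Require Import Defs.
From HB Require Import structures.
From mathcomp Require Import all_boot all_order all_algebra.
From mathcomp Require Import all_classical all_reals.
From mathcomp Require Import topology normedtype.
From mathcomp Require Import ring lra.
Import Order.TTheory GRing.Theory Num.Theory.
Import numFieldNormedType.Exports.
Local Open Scope ring_scope.
Local Open Scope classical_set_scope.
Set Implicit Arguments.

Lemma tangent1 (R : realType) (P W t : R) : 0 <= P -> 0 < W -> 0 < t ->
  2 * P / t - P * W / t ^+ 2 <= P / W.
Proof.
move=> P0 W0 t0.
rewrite -subr_ge0.
have -> : P / W - (2 * P / t - P * W / t ^+ 2) = P * (t - W) ^+ 2 / (W * t ^+ 2).
  by field; apply/andP; split; apply/lt0r_neq0.
apply: divr_ge0; first by apply: mulr_ge0 => //; apply: sqr_ge0.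
by apply: mulr_ge0; [apply: ltW | apply: sqr_ge0].
Qed.

Lemma tangent2 (R : realType) (W s u k : R) : 0 < W ->
  2 * k * (s * u) - k ^+ 2 * (u ^+ 2 / W) <= W * s ^+ 2.
Proof.
move=> W0; rewrite -subr_ge0.
have -> : W * s ^+ 2 - (2 * k * (s * u) - k ^+ 2 * (u ^+ 2 / W)) = (W * s - k * u) ^+ 2 / W.
  by field; apply/lt0r_neq0.
by apply: divr_ge0; [apply: sqr_ge0 | apply: ltW].
Qed.

Lemma weak_dual (R : realType) (N : nat) (lam u s : 'I_N -> R) (l : R) :
  (forall i, lam i < l) -> \sum_(i < N) s i ^+ 2 = 1 ->
  \sum_(i < N) lam i * s i ^+ 2 <= l - (\sum_(i < N) s i * u i) ^+ 2 / s_lu lam u l.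
Proof.
move=> hl hs.
set al := \sum_(i < N) s i * u i.
have E1 : \sum_(i < N) (l - lam i) * s i ^+ 2 = l - \sum_(i < N) lam i * s i ^+ 2.
  transitivity (\sum_(i < N) (l * s i ^+ 2 - lam i * s i ^+ 2)).
    by apply: eq_bigr => i _; ring.
  by rewrite sumrB -mulr_sumr hs mulr1.
have s0 : 0 <= s_lu lam u l.
  rewrite /s_lu; apply: sumr_ge0 => i _; apply: divr_ge0; first exact: sqr_ge0.
  by rewrite subr_ge0 ltW.
have [sz|snz] := eqVneq (s_lu lam u l) 0.
  rewrite sz invr0 mulr0 subr0 -subr_ge0 -E1; apply: sumr_ge0 => i _.
  by apply: mulr_ge0; [rewrite subr_ge0 ltW | apply: sqr_ge0].
set k := al / s_lu lam u l.
have E2 : \sum_(i < N) (2 * k * (s i * u i) - k ^+ 2 * (u i ^+ 2 / (l - lam i)))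
   = 2 * k * al - k ^+ 2 * s_lu lam u l.
  by rewrite sumrB -!mulr_sumr.
have H : 2 * k * al - k ^+ 2 * s_lu lam u l <= l - \sum_(i < N) lam i * s i ^+ 2.
  rewrite -E1 -E2; apply: ler_sum => i _; apply: tangent2.
  by rewrite subr_gt0.
have -> : al ^+ 2 / s_lu lam u l = 2 * k * al - k ^+ 2 * s_lu lam u l.
  by rewrite /k; field.
lra.
Qed.

Lemma wsum_pos (R : realType) (n : nat) (c e : 'I_n -> R) :
  (forall i, 0 < c i) -> (forall i, 0 <= e i) -> 0 < \sum_(i < n) e i ->
  0 < \sum_(i < n) c i * e i.
Proof.
move=> hc he hs.
have ge : 0 <= \sum_(i < n) c i * e i.
  by apply: sumr_ge0 => i _; apply: mulr_ge0; [apply: ltW | apply: he].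
rewrite lt_def ge andbT; apply/eqP => h0.
have h := psumr_eq0P (fun i _ => mulr_ge0 (ltW (hc i)) (he i)) h0.
have : \sum_(i < n) e i = 0.
  apply: big1 => i _; have /eqP := h i isT.
  by rewrite mulf_eq0 (negbTE (lt0r_neq0 (hc i))) /= => /eqP.
by move=> h1; move: hs; rewrite h1 ltxx.
Qed.

Lemma sum_cont (R : realType) (I : Type) (r : seq I) (F : I -> R -> R) (x : R) :
  (forall i, {for x, continuous (F i)}) ->
  {for x, continuous (fun y => \sum_(i <- r) F i y)}.
Proof.
move=> hF; elim: r => [|i r IH].
  have -> : (fun y => \sum_(i <- [::]) F i y) = (fun _ => 0) by apply: funext => y; rewrite big_nil.
  exact: cst_continuous.
have -> : (fun y => \sum_(j <- i :: r) F j y) = (F i + (fun y => \sum_(j <- r) F j y))%R.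
  by apply: funext => y; rewrite big_cons.
exact: continuousD.
Qed.

Lemma inv_cont (R : realType) (c b x : R) : x != b ->
  {for x, continuous (fun y : R => c / (y - b))}.
Proof.
move=> hx.
apply: continuousM; first exact: cst_continuous.
apply: continuousV; first by rewrite subr_eq0.
apply: continuousB; [exact: cvg_id | exact: cst_continuous].
Qed.

Lemma inv2_cont (R : realType) (c b x : R) : x != b ->
  {for x, continuous (fun y : R => c / (y - b) ^+ 2)}.
Proof.
move=> hx.
apply: continuousM; first exact: cst_continuous.
apply: continuousV; first by rewrite expf_neq0 // subr_eq0.
have -> : (fun y : R => (y - b) ^+ 2) = ((fun y => y - b) \* (fun y => y - b))%R.
  by apply: funext => y; rewrite /= expr2.
apply: continuousM; apply: continuousB; (exact: cvg_id || exact: cst_continuous).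
Qed.

Lemma ivt_test (R : realType) (f : R -> R) (a b v : R) : a <= b ->
  {in `[a, b]%R, continuous f} -> f a <= v <= f b -> exists2 c, c \in `[a, b]%R & f c = v.
Proof.
move=> ab hc hv; apply: (IVT ab).
  by apply: continuous_in_subspaceT => y; rewrite inE /= => hy; apply: hc.
case/andP: hv => h1 h2; apply/andP; split.
  by apply: le_trans h1; rewrite ge_min lexx.
by apply: le_trans h2 _; rewrite le_max lexx orbT.
Qed.

Lemma ivt_case (R : realType) (n : nat) (lam u : 'I_n.+1 -> R)
  (hlam : forall i j : 'I_n.+1, (i < j)%N -> lam i < lam j)
  (hu : forall i : 'I_n.+1, 0 < u i ^+ 2 < 1)
  (hsum : \sum_(i < n.+1) u i ^+ 2 = 1) (alpha : R) :
  u ord_max ^+ 2 < alpha ^+ 2 -> alpha ^+ 2 < 1 ->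
  exists sigma : 'I_n.+1 -> R, exists2 l : R, lam ord_max < l &
    [/\ \sum_(i < n.+1) sigma i ^+ 2 = 1, \sum_(i < n.+1) sigma i * u i = alpha &
     l - alpha ^+ 2 / s_lu lam u l - \sum_(i < n.+1) lam i * sigma i ^+ 2 <= 0].
Proof.
move=> hpa ha1.
pose N : 'I_n.+1 := ord_max.
pose w' (i : 'I_n) : 'I_n.+1 := widen_ord (leqnSn n) i.
have leN : forall i, lam i <= lam N.
  move=> i; have [/eqP ->|ne] := boolP (i == N); first by [].
  by apply/ltW/hlam; rewrite ltn_neqAle ne /= -ltnS ltn_ord.
have lt'N : forall i : 'I_n, lam (w' i) < lam N.
  by move=> i; apply: hlam => /=; rewrite ltn_ord.
have ge0 : forall i, lam ord0 <= lam i.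
  move=> i; have [/eqP ->|ne] := boolP (i == ord0); first by [].
  by apply/ltW/hlam; rewrite lt0n; apply: contra ne => /eqP h; apply/eqP/val_inj.
set LN := lam N.
set a := alpha ^+ 2 in hpa ha1 *.
set p := u N ^+ 2 in hpa *.
have [p0 p1] : 0 < p /\ p < 1 by have /andP[] := hu N.
have a0 : 0 < a by apply: lt_trans hpa.
set D := LN - lam ord0.
have D0 : 0 <= D by rewrite subr_ge0.
pose t (l : R) := \sum_(i < n.+1) u i ^+ 2 / (l - lam i) ^+ 2.
pose Fn (l : R) := s_lu lam u l ^+ 2 / t l.
have wpos : forall l i, LN < l -> 0 < l - lam i.
  by move=> l i hl; rewrite subr_gt0; apply: le_lt_trans hl.
have spos : forall l, LN < l -> 0 < s_lu lam u l.
  move=> l hl; rewrite /s_lu big_ord_recr /=.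
  have h1 : 0 <= \sum_(i < n) u (widen_ord (leqnSn n) i) ^+ 2 / (l - lam (widen_ord (leqnSn n) i)).
    by apply: sumr_ge0 => i _; apply: divr_ge0; [apply: sqr_ge0 | apply: ltW; apply: wpos].
  have h2 : 0 < u ord_max ^+ 2 / (l - lam ord_max) by apply: divr_gt0 => //; apply: wpos.
  lra.
have tpos : forall l, LN < l -> 0 < t l.
  move=> l hl; rewrite /t big_ord_recr /=.
  have h1 : 0 <= \sum_(i < n) u (widen_ord (leqnSn n) i) ^+ 2 / (l - lam (widen_ord (leqnSn n) i)) ^+ 2.
    by apply: sumr_ge0 => i _; apply: divr_ge0; apply: sqr_ge0.
  have h2 : 0 < u ord_max ^+ 2 / (l - lam ord_max) ^+ 2.
    by apply: divr_gt0 => //; apply: exprn_gt0; apply: wpos.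
  lra.
suff [l hl hF] : exists2 l, LN < l & Fn l = a.
  have s0 := spos l hl; have t0 := tpos l hl.
  have wn0 : forall i, l - lam i != 0 by move=> i; apply: lt0r_neq0; apply: wpos.
  set s := s_lu lam u l in s0 hF *.
  have ht : t l = s ^+ 2 / a.
    have h : t l * a = s ^+ 2 by rewrite -hF /Fn mulrC divfK // lt0r_neq0.
    by rewrite -h mulfK // lt0r_neq0.
  set k := alpha / s.
  pose sig := fun i => k * u i / (l - lam i).
  exists sig; exists l => //.
  have E1 : \sum_(i < n.+1) sig i ^+ 2 = k ^+ 2 * t l.
    by rewrite /t mulr_sumr; apply: eq_bigr => i _; rewrite /sig; field.
  have E2 : \sum_(i < n.+1) sig i * u i = k * s.
    by rewrite /s /s_lu mulr_sumr; apply: eq_bigr => i _; rewrite /sig; field.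
  have E3 : \sum_(i < n.+1) lam i * sig i ^+ 2
      = l * \sum_(i < n.+1) sig i ^+ 2 - k ^+ 2 * s.
    by rewrite /s /s_lu mulr_sumr mulr_sumr -sumrB; apply: eq_bigr => i _; rewrite /sig; field; apply: wn0.
  have an0 : alpha != 0 by apply/eqP => h; move: a0; rewrite /a h expr0n ltxx.
  have sn0 : s != 0 by apply: lt0r_neq0.
  split.
  - by rewrite E1 ht /k /a; field; rewrite an0 sn0.
  - by rewrite E2 /k; field.
  - rewrite E3 E1 ht /k /a.
    have -> : l - alpha ^+ 2 / s - (l * ((alpha / s) ^+ 2 * (s ^+ 2 / alpha ^+ 2)) - (alpha / s) ^+ 2 * s) = 0.
      by field; rewrite an0 sn0.
    by [].
set e := Num.sqrt (a * p).
have e0 : 0 <= e by apply: sqrtr_ge0.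
have he : e ^+ 2 = a * p by rewrite sqr_sqrtr //; apply: mulr_ge0; apply: ltW.
have hep : p < e.
  have : p ^+ 2 < e ^+ 2 by rewrite he expr2 ltr_pM2r.
  by rewrite ltr_sqr ?nnegrE //; apply: ltW.
set K := \sum_(i < n) u (w' i) ^+ 2 / (LN - lam (w' i)).
have K0 : 0 <= K.
  by apply: sumr_ge0 => i _; apply: divr_ge0; [apply: sqr_ge0 | apply: ltW; rewrite subr_gt0].
set x0 := (e - p) / (K + 1).
have hx0p : 0 < x0 by apply: divr_gt0; lra.
have Kx0 : K * x0 <= e - p.
  rewrite /x0 mulrA ler_pdivrMr; last lra.
  have : 0 <= e - p by lra.
  nra.
set l0 := LN + x0.
set x1 := x0 + a * (D + 1) / (1 - a).
have hx1x0 : x0 <= x1.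
  by rewrite /x1 lerDl; apply: divr_ge0; [apply: mulr_ge0; lra | lra].
set l1 := LN + x1.
have l0LN : LN < l0 by rewrite /l0; lra.
have l1LN : LN < l1 by rewrite /l1; lra.
have F0 : Fn l0 <= a.
  have sl : s_lu lam u l0 <= p / x0 + K.
    rewrite /s_lu big_ord_recr /= addrC.
    have -> : l0 - lam ord_max = x0 by rewrite /l0 /LN /N; ring.
    rewrite lerD2l; apply: ler_sum => i _; apply: ler_wpM2l; first exact: sqr_ge0.
    rewrite lef_pV2 ?posrE; first by rewrite /l0; lra.
      by apply: wpos.
    by rewrite subr_gt0.
  have tl : p / x0 ^+ 2 <= t l0.
    rewrite /t big_ord_recr /=.
    have -> : l0 - lam ord_max = x0 by rewrite /l0 /LN /N; ring.
    rewrite lerDr; apply: sumr_ge0 => i _; apply: divr_ge0; apply: sqr_ge0.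
  have s0 := spos l0 l0LN.
  have t0 := tpos l0 l0LN.
  have pt0 : 0 < p / x0 ^+ 2 by apply: divr_gt0 => //; apply: exprn_gt0.
  apply: (@le_trans _ _ ((p / x0 + K) ^+ 2 / (p / x0 ^+ 2))).
    apply: ler_pM.
    - exact: sqr_ge0.
    - by rewrite invr_ge0; apply: ltW.
    - rewrite ler_sqr ?nnegrE //; [exact: ltW | apply: addr_ge0 => //; apply: divr_ge0; apply: ltW => //].
    - by rewrite lef_pV2 ?posrE.
  have -> : (p / x0 + K) ^+ 2 / (p / x0 ^+ 2) = (p + K * x0) ^+ 2 / p.
    by field; rewrite !lt0r_neq0.
  rewrite ler_pdivrMr // -he.
  by rewrite ler_sqr ?nnegrE; try lra; apply: addr_ge0; [apply: ltW | apply: mulr_ge0 => //; apply: ltW].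
have F1 : a <= Fn l1.
  have s0 := spos l1 l1LN.
  have t0 := tpos l1 l1LN.
  have hx1p : 0 < x1 by lra.
  have sl : 1 / (x1 + D) <= s_lu lam u l1.
    have -> : 1 / (x1 + D) = \sum_(i < n.+1) u i ^+ 2 / (x1 + D).
      by rewrite -mulr_suml hsum.
    apply: ler_sum => i _; apply: ler_wpM2l; first exact: sqr_ge0.
    rewrite lef_pV2 ?posrE; first by rewrite /l1 /D; have := ge0 i; lra.
      by lra.
    by apply: wpos.
  have tl : t l1 <= s_lu lam u l1 / x1.
    rewrite /t /s_lu mulr_suml; apply: ler_sum => i _.
    have wi : x1 <= l1 - lam i by rewrite /l1; have := leN i; rewrite -/LN; lra.
    have wi0 : 0 < l1 - lam i by lra.
    rewrite expr2 invfM mulrA; apply: ler_wpM2l.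
      by apply: divr_ge0; [apply: sqr_ge0 | apply: ltW].
    by rewrite lef_pV2 ?posrE.
  apply: (@le_trans _ _ (s_lu lam u l1 * x1)).
    apply: (@le_trans _ _ (x1 / (x1 + D))).
      rewrite ler_pdivlMr; last lra.
      rewrite /x1; have : 0 <= x0 * (1 - a) by apply: mulr_ge0; lra.
      have h : a * (D + 1) / (1 - a) * (1 - a) = a * (D + 1) by field; apply: lt0r_neq0; lra.
      nra.
    have -> : x1 / (x1 + D) = 1 / (x1 + D) * x1 by rewrite mulrC mul1r.
    by apply: ler_wpM2r => //; apply: ltW.
  rewrite /Fn.
  have -> : s_lu lam u l1 * x1 = s_lu lam u l1 ^+ 2 / (s_lu lam u l1 / x1).
    by field; rewrite !lt0r_neq0.
  apply: ler_wpM2l; first exact: sqr_ge0.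
  by rewrite lef_pV2 ?posrE //; apply: divr_gt0.
have cont : {in `[l0, l1]%R, continuous Fn}.
  move=> y; rewrite in_itv /= => /andP[hy _].
  have yLN : LN < y by apply: lt_le_trans l0LN hy.
  have yn : forall i, y != lam i by move=> i; rewrite -subr_eq0; apply: lt0r_neq0; apply: wpos.
  have cs : {for y, continuous (fun z => s_lu lam u z)}.
    by apply: sum_cont => i; apply: inv_cont.
  have ct : {for y, continuous t}.
    by apply: sum_cont => i; apply: inv2_cont.
  have -> : Fn = ((fun z => s_lu lam u z) \* (fun z => s_lu lam u z)) \* (fun z => (t z)^-1).
    by apply: funext => z; rewrite /Fn /= expr2.
  apply: continuousM; first exact: continuousM.
  by apply: continuousV => //; apply: lt0r_neq0; apply: tpos.
have l01 : l0 <= l1 by rewrite /l0 /l1; lra.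
have [c hc hFc] := @ivt_test R Fn l0 l1 a l01 cont (ltac:(apply/andP; split; [exact: F0 | exact: F1])).
exists c => //.
by move: hc; rewrite in_itv /= => /andP[hc _]; apply: lt_le_trans l0LN hc.
Qed.

Lemma end_case (R : realType) (n : nat) (lam u : 'I_n.+1 -> R)
  (hlam : forall i j : 'I_n.+1, (i < j)%N -> lam i < lam j)
  (hu : forall i : 'I_n.+1, 0 < u i ^+ 2 < 1)
  (hsum : \sum_(i < n.+1) u i ^+ 2 = 1) (alpha : R) :
  alpha ^+ 2 = 1 ->
  exists sigma : 'I_n.+1 -> R, exists2 l : R, lam ord_max < l &
    [/\ \sum_(i < n.+1) sigma i ^+ 2 = 1, \sum_(i < n.+1) sigma i * u i = alpha &
     l - alpha ^+ 2 / s_lu lam u l - \sum_(i < n.+1) lam i * sigma i ^+ 2 <=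
     2 * (lam ord_max - lam ord0) * (u ord_max ^+ 2 / Num.sqrt (1 - u ord_max ^+ 2))].
Proof.
move=> ha.
pose N : 'I_n.+1 := ord_max.
have leN : forall i, lam i <= lam N.
  move=> i; have [/eqP ->|ne] := boolP (i == N); first by [].
  by apply/ltW/hlam; rewrite ltn_neqAle ne /= -ltnS ltn_ord.
have ge0 : forall i, lam ord0 <= lam i.
  move=> i; have [/eqP ->|ne] := boolP (i == ord0); first by [].
  by apply/ltW/hlam; rewrite lt0n; apply: contra ne => /eqP h; apply/eqP/val_inj.
set LN := lam N.
set p := u N ^+ 2.
have [p0 p1] : 0 < p /\ p < 1 by have /andP[] := hu N.
set v : R := Num.sqrt (1 - p).
have v0 : 0 < v by rewrite sqrtr_gt0; lra.
set D := LN - lam ord0.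
have D0 : 0 <= D by rewrite subr_ge0.
set x := D * v / (2 * p) + 1.
have hq0 : 0 <= D * v / (2 * p).
  by apply: divr_ge0; [apply: mulr_ge0 => //; apply: ltW | lra].
have x0 : 0 < x by rewrite /x; lra.
have hx : D * v <= 2 * p * x.
  rewrite /x mulrDr mulr1.
  have -> : 2 * p * (D * v / (2 * p)) = D * v by field; apply: lt0r_neq0.
  lra.
set l := LN + x.
exists (fun i => alpha * u i); exists l; first by rewrite /l; lra.
have hw : forall i, x <= l - lam i <= x + D.
  by move=> i; have := leN i; have := ge0 i; rewrite /l /D -/LN => h1 h2; apply/andP; split; lra.
have wpos : forall i, 0 < l - lam i by move=> i; have /andP[h _] := hw i; lra.
set A := \sum_(i < n.+1) u i ^+ 2 * (l - lam i).
have HA : x <= A <= x + D.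
  have E1 : x = \sum_(i < n.+1) u i ^+ 2 * x by rewrite -mulr_suml hsum mul1r.
  have E2 : x + D = \sum_(i < n.+1) u i ^+ 2 * (x + D) by rewrite -mulr_suml hsum mul1r.
  apply/andP; split.
    by rewrite {1}E1; apply: ler_sum => i _; apply: ler_wpM2l; [apply: sqr_ge0 | case/andP: (hw i)].
  by rewrite E2; apply: ler_sum => i _; apply: ler_wpM2l; [apply: sqr_ge0 | case/andP: (hw i)].
have Hval : \sum_(i < n.+1) lam i * (alpha * u i) ^+ 2 = l - A.
  have -> : \sum_(i < n.+1) lam i * (alpha * u i) ^+ 2 = \sum_(i < n.+1) u i ^+ 2 * lam i.
    by apply: eq_bigr => i _; rewrite exprMn ha mul1r mulrC.
  have -> : A = \sum_(i < n.+1) (u i ^+ 2 * l - u i ^+ 2 * lam i).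
    by apply: eq_bigr => i _; rewrite mulrBr.
  by rewrite sumrB -mulr_suml hsum mul1r opprB addrC subrK.
set s := s_lu lam u l.
have s0 : 0 < s.
  rewrite /s /s_lu big_ord_recr /=.
  have h1 : 0 <= \sum_(i < n) u (widen_ord (leqnSn n) i) ^+ 2 / (l - lam (widen_ord (leqnSn n) i)).
    by apply: sumr_ge0 => i _; apply: divr_ge0; [apply: sqr_ge0 | apply: ltW].
  have h2 : 0 < u ord_max ^+ 2 / (l - lam ord_max) by apply: divr_gt0 => //; have /andP[] := hu ord_max.
  lra.
have Hs : s * (x * (x + D)) <= 2 * x + D - A.
  have E : \sum_(i < n.+1) u i ^+ 2 * (2 * x + D - (l - lam i)) = 2 * x + D - A.
    have -> : \sum_(i < n.+1) u i ^+ 2 * (2 * x + D - (l - lam i))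
        = \sum_(i < n.+1) (u i ^+ 2 * (2 * x + D) - u i ^+ 2 * (l - lam i)).
      by apply: eq_bigr => i _; rewrite mulrBr.
    by rewrite sumrB -mulr_suml hsum mul1r.
  rewrite -E.
  rewrite /s /s_lu mulr_suml; apply: ler_sum => i _.
  have wi := wpos i; have /andP[h1 h2] := hw i.
  set w := l - lam i in wi h1 h2 *.
  rewrite -mulrA; apply: ler_wpM2l; first exact: sqr_ge0.
  rewrite ler_pdivrMl //.
  have : 0 <= (w - x) * (x + D - w) by apply: mulr_ge0; lra.
  nra.
split.
- by rewrite -hsum; apply: eq_bigr => i _; rewrite exprMn ha mul1r.
- by rewrite -[RHS]mulr1 -hsum mulr_sumr; apply: eq_bigr => i _; rewrite expr2 mulrA.
- rewrite Hval ha.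
  have -> : l - 1 / s - (l - A) = A - 1 / s by ring.
  have /andP[HA1 HA2] := HA.
  have Q0 : 0 < 2 * x + D - A by lra.
  have Hinv : x * (x + D) / (2 * x + D - A) <= 1 / s.
    by rewrite ler_pdivrMr // mul1r ler_pdivlMl //.
  apply: (@le_trans _ _ (A - x * (x + D) / (2 * x + D - A))); first lra.
  apply: (@le_trans _ _ (D ^+ 2 / x)).
    rewrite lerBlDr -lerBlDl ler_pdivlMr // .
    have -> : (A - D ^+ 2 / x) * (2 * x + D - A) = A * (2 * x + D - A) - D ^+ 2 / x * (2 * x + D - A) by ring.
    have hD : D ^+ 2 / x * (2 * x + D - A) >= D ^+ 2.
      rewrite mulrAC ler_pdivlMr // ; nra.
    nra.
  have h : D * (D * v) <= D * (2 * p * x) by apply: ler_wpM2l.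
  rewrite ler_pdivrMr //.
  have -> : 2 * D * (p / v) * x = D * (2 * p * x) / v by field; apply: lt0r_neq0.
  rewrite ler_pdivlMr //.
  by have -> : D ^+ 2 * v = D * (D * v) by rewrite expr2 mulrA.
Qed.

Lemma small_case (R : realType) (n : nat) (lam u : 'I_n.+1 -> R)
  (hlam : forall i j : 'I_n.+1, (i < j)%N -> lam i < lam j)
  (hu : forall i : 'I_n.+1, 0 < u i ^+ 2 < 1)
  (hsum : \sum_(i < n.+1) u i ^+ 2 = 1) (alpha : R) :
  -1 <= alpha <= 1 -> alpha ^+ 2 <= u ord_max ^+ 2 ->
  exists sigma : 'I_n.+1 -> R, exists2 l : R, lam ord_max < l &
    [/\ \sum_(i < n.+1) sigma i ^+ 2 = 1, \sum_(i < n.+1) sigma i * u i = alpha &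
     l - alpha ^+ 2 / s_lu lam u l - \sum_(i < n.+1) lam i * sigma i ^+ 2 <=
     2 * (lam ord_max - lam ord0) * (u ord_max ^+ 2 / Num.sqrt (1 - u ord_max ^+ 2))].
Proof.
move=> /andP[ha1 ha2] hap.
pose N : 'I_n.+1 := ord_max.
pose w' (i : 'I_n) : 'I_n.+1 := widen_ord (leqnSn n) i.
have leN : forall i, lam i <= lam N.
  move=> i; have [/eqP ->|ne] := boolP (i == N); first by [].
  by apply/ltW/hlam; rewrite ltn_neqAle ne /= -ltnS ltn_ord.
have lt'N : forall i : 'I_n, lam (w' i) < lam N.
  by move=> i; apply: hlam => /=; rewrite ltn_ord.
have ge0 : forall i, lam ord0 <= lam i.
  move=> i; have [/eqP ->|ne] := boolP (i == ord0); first by [].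
  by apply/ltW/hlam; rewrite lt0n; apply: contra ne => /eqP h; apply/eqP/val_inj.
set p := u N ^+ 2.
set q := \sum_(i < n) u (w' i) ^+ 2.
have hq : q = 1 - p by rewrite -hsum big_ord_recr /= addrK.
have [p0 p1] : 0 < p /\ p < 1 by have /andP[] := hu N.
have q0 : 0 < q by lra.
set M := \sum_(i < n) lam (w' i) * u (w' i) ^+ 2.
set m := M / q.
have dq : 0 < lam N * q - M.
  have -> : lam N * q - M = \sum_(i < n) (lam N - lam (w' i)) * u (w' i) ^+ 2.
    by rewrite /M /q mulr_sumr -sumrB; apply: eq_bigr => i _; ring.
  apply: wsum_pos => //; first by move=> i; rewrite subr_gt0.
  by move=> i; apply: sqr_ge0.
set d := lam N - m.
have d0 : 0 < d.
  have -> : d = (lam N * q - M) / q by rewrite /d /m; field; apply/lt0r_neq0.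
  by apply: divr_gt0.
set D := lam N - lam ord0.
have dD : d <= D.
  suff : lam ord0 * q <= M.
    move=> h; rewrite /d /D lerD2l lerN2 /m ler_pdivlMr //.
  rewrite /q mulr_sumr; apply: ler_sum => i _; apply: ler_wpM2r; [apply: sqr_ge0 | apply: ge0].
have m_lt : m < lam N by rewrite -subr_gt0.
set a := alpha ^+ 2.
have a0 : 0 <= a by apply: sqr_ge0.
have a1 : a <= 1 by rewrite /a; nra.
set r := Num.sqrt (1 - a).
have r0 : 0 <= r by apply: sqrtr_ge0.
have hr : r ^+ 2 = 1 - a by rewrite sqr_sqrtr //; lra.
set v := Num.sqrt q.
have v0 : 0 < v by rewrite sqrtr_gt0.
have hv : v ^+ 2 = q by rewrite sqr_sqrtr //; apply: ltW.
set mu := u N.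
set sg : R := if 0 <= alpha * mu then 1 else -1.
have hsg : sg ^+ 2 = 1 by rewrite /sg; case: ifP => _; rewrite ?expr1n ?sqrrN ?expr1n.
have e0 : 0 <= sg * (alpha * mu).
  rewrite /sg; case: ifP => h; first by rewrite mul1r.
  by rewrite mulN1r oppr_ge0; apply: ltW; rewrite ltNge h.
have he : (sg * (alpha * mu)) ^+ 2 = a * p by rewrite exprMn hsg mul1r exprMn.
set e := sg * (alpha * mu) in e0 he.
set tau := sg * r.
set b := alpha * mu + tau * v.
set G := alpha * v - tau * mu.
have hbG : b ^+ 2 + G ^+ 2 = 1.
  have -> : b ^+ 2 + G ^+ 2 = (alpha ^+ 2 + sg ^+ 2 * r ^+ 2) * (mu ^+ 2 + v ^+ 2) by rewrite /b /G /tau; ring.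
  by rewrite hsg hr hv mul1r -/a -/p hq; ring.
have hG : G ^+ 2 = a * q + (1 - a) * p - 2 * (v * r * e).
  have -> : G ^+ 2 = alpha ^+ 2 * v ^+ 2 - 2 * (v * r * (sg * (alpha * mu))) + sg ^+ 2 * r ^+ 2 * mu ^+ 2.
    by rewrite /G /tau; ring.
  by rewrite hsg hr hv mul1r -/a -/p -/e; lra.
have ap : a <= p by [].
have Gp : G ^+ 2 <= p.
  have ea : a <= e by nra.
  have rv : v <= r by nra.
  have h : v * v * a <= v * r * e.
    apply: ler_pM => //.
      by apply: mulr_ge0; apply: ltW.
    by apply: ler_wpM2l => //; apply: ltW.
  have wa : a * q <= v * r * e by rewrite -hv expr2; lra.
  rewrite hG; nra.
pose sigma (i : 'I_n.+1) := if (i < n)%N then G * u i / v else b.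
exists sigma.
exists (lam N + p * D).
  by rewrite -subr_gt0 addrC addKr; apply: mulr_gt0 => //; lra.
have vn0 : v != 0 by apply: lt0r_neq0.
have S1 : \sum_(i < n.+1) sigma i ^+ 2 = 1.
  rewrite big_ord_recr /= /sigma /= ltnn.
  have -> : \sum_(i < n) (if (widen_ord (leqnSn n) i < n)%N then G * u (widen_ord (leqnSn n) i) / v else b) ^+ 2
      = G ^+ 2 / v ^+ 2 * q.
    rewrite /q mulr_sumr; apply: eq_bigr => i _; by rewrite /= ltn_ord; field.
  by rewrite hv mulfVK ?lt0r_neq0 // addrC.
have S2 : \sum_(i < n.+1) sigma i * u i = alpha.
  rewrite big_ord_recr /= /sigma /= ltnn.
  have -> : \sum_(i < n) (if (widen_ord (leqnSn n) i < n)%N then G * u (widen_ord (leqnSn n) i) / v else b) * u (widen_ord (leqnSn n) i)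
      = G / v * v ^+ 2.
    by rewrite hv /q mulr_sumr; apply: eq_bigr => i _; rewrite /= ltn_ord; field.
  have -> : G / v * v ^+ 2 + b * u ord_max = alpha * (mu ^+ 2 + v ^+ 2).
    by rewrite /G /b /mu; field.
  by rewrite hv -/p hq subrKC mulr1.
have S3 : \sum_(i < n.+1) lam i * sigma i ^+ 2 = lam N * b ^+ 2 + G ^+ 2 * m.
  rewrite big_ord_recr /= /sigma /= ltnn.
  have -> : \sum_(i < n) lam (widen_ord (leqnSn n) i) * (if (widen_ord (leqnSn n) i < n)%N then G * u (widen_ord (leqnSn n) i) / v else b) ^+ 2
      = G ^+ 2 / v ^+ 2 * M.
    by rewrite /M mulr_sumr; apply: eq_bigr => i _; rewrite /= ltn_ord; field.
  by rewrite hv /m addrC; congr (_ + _); field; apply: lt0r_neq0.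
split => //.
rewrite S3 -hq -/v.
set l := lam N + p * D.
have pD : 0 < p * D by apply: mulr_gt0 => //; lra.
have hl : lam N < l by rewrite /l; lra.
have s0 : 0 <= s_lu lam u l.
  rewrite /s_lu; apply: sumr_ge0 => i _; apply: divr_ge0; first exact: sqr_ge0.
  by rewrite subr_ge0; apply: ltW; apply: le_lt_trans hl.
have as0 : 0 <= a / s_lu lam u l by apply: divr_ge0.
have hb : b ^+ 2 = 1 - G ^+ 2 by lra.
have hm : m = lam N - d by rewrite /d; lra.
rewrite hb hm.
have G0 : 0 <= G ^+ 2 by apply: sqr_ge0.
have Gd : G ^+ 2 * d <= p * D by apply: ler_pM => //; apply: ltW.
have pv : 2 * D * p <= 2 * D * (p / v).
  have v1 : v <= 1 by nra.
  apply: ler_wpM2l; first lra.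
  by rewrite ler_pdivlMr // ler_piMr //; apply: ltW.
have -> : lam N * (1 - G ^+ 2) + G ^+ 2 * (lam N - d) = lam N - G ^+ 2 * d.
  by rewrite mulrBr mulr1 mulrBr; lra.
rewrite /l; lra.
Qed.

Theorem corollary3p5 (R : realType) (n : nat) (lam u : 'I_n.+1 -> R)
  (hlam : forall i j : 'I_n.+1, (i < j)%N -> lam i < lam j)
  (hu : forall i : 'I_n.+1, 0 < u i ^+ 2 < 1)
  (hsum : \sum_(i < n.+1) u i ^+ 2 = 1) :
  sup [set z : R | exists2 alpha : R, -1 <= alpha <= 1 &
         z = `| sup_part lam u alpha - inf_part lam u (lam ord_max) alpha |]
  <= 2 * (lam ord_max - lam ord0) * (u ord_max ^+ 2 / Num.sqrt (1 - u ord_max ^+ 2)).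
Proof.
set C := 2 * (lam ord_max - lam ord0) * (u ord_max ^+ 2 / Num.sqrt (1 - u ord_max ^+ 2)).
have leN : forall i, lam i <= lam ord_max.
  move=> i; have [/eqP ->|ne] := boolP (i == ord_max); first by [].
  by apply/ltW/hlam; rewrite ltn_neqAle ne /= -ltnS ltn_ord.
have ge0 : forall i, lam ord0 <= lam i.
  move=> i; have [/eqP ->|ne] := boolP (i == ord0); first by [].
  by apply/ltW/hlam; rewrite lt0n; apply: contra ne => /eqP h; apply/eqP/val_inj.
have C0 : 0 <= C.
  have [p0 p1] : 0 < u ord_max ^+ 2 /\ u ord_max ^+ 2 < 1 by have /andP[] := hu ord_max.
  apply: mulr_ge0; first by apply: mulr_ge0 => //; rewrite subr_ge0.
  by apply: divr_ge0; [apply: ltW | apply: sqrtr_ge0].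
have key : forall alpha, -1 <= alpha <= 1 ->
    `| sup_part lam u alpha - inf_part lam u (lam ord_max) alpha | <= C.
  move=> alpha ha.
  have [sig [l hl [h1 h2 h3]]] : exists sigma : 'I_n.+1 -> R, exists2 l : R, lam ord_max < l &
    [/\ \sum_(i < n.+1) sigma i ^+ 2 = 1, \sum_(i < n.+1) sigma i * u i = alpha &
     l - alpha ^+ 2 / s_lu lam u l - \sum_(i < n.+1) lam i * sigma i ^+ 2 <= C].
    have [hap|hpa] := lerP (alpha ^+ 2) (u ord_max ^+ 2).
      exact: small_case.
    have [ha1|ha1] := ltrP (alpha ^+ 2) 1.
      have [sig [l hl [h1 h2 h3]]] := @ivt_case R n lam u hlam hu hsum alpha hpa ha1.
      by exists sig; exists l => //; split => //; apply: le_trans h3 C0.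
    have ha2 : alpha ^+ 2 = 1 by apply/eqP; rewrite eq_le ha1 andbT; case/andP: ha => ? ?; nra.
    exact: end_case.
  have wd : forall (sg : 'I_n.+1 -> R) l', \sum_(i < n.+1) sg i ^+ 2 = 1 -> lam ord_max < l' ->
      \sum_(i < n.+1) lam i * sg i ^+ 2 <= l' - (\sum_(i < n.+1) sg i * u i) ^+ 2 / s_lu lam u l'.
    move=> sg l' hs hl'; apply: weak_dual => // i; apply: le_lt_trans hl'; exact: leN.
  have sq1 : forall sg : 'I_n.+1 -> R, Num.sqrt (\sum_(i < n.+1) sg i ^+ 2) = 1 ->
      \sum_(i < n.+1) sg i ^+ 2 = 1.
    move=> sg hs; rewrite -[LHS]sqr_sqrtr ?hs ?expr1n //.
    by apply: sumr_ge0 => i _; apply: sqr_ge0.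
  set Fs := [set x : R | exists sigma : 'I_n.+1 -> R,
         [/\ Num.sqrt (\sum_(i < n.+1) sigma i ^+ 2) = 1,
             \sum_(i < n.+1) sigma i * u i = alpha &
             x = \sum_(i < n.+1) lam i * sigma i ^+ 2]].
  set Gs := [set y : R | exists2 l : R, lam ord_max < l & y = l - alpha ^+ 2 / s_lu lam u l].
  have FV : Fs (\sum_(i < n.+1) lam i * sig i ^+ 2) by exists sig; rewrite h1 sqrtr1.
  have GV : Gs (l - alpha ^+ 2 / s_lu lam u l) by exists l.
  have Fub : ubound Fs (lam ord_max).
    move=> x [sg [hs hsu ->]]; have hs' := sq1 _ hs.
    rewrite -[X in _ <= X]mulr1 -hs' mulr_sumr; apply: ler_sum => i _.
    by apply: ler_wpM2r; [apply: sqr_ge0 | apply: leN].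
  have Glb : lbound Gs (\sum_(i < n.+1) lam i * sig i ^+ 2).
    by move=> y [l' hl' ->]; rewrite -h2; apply: wd.
  have fge : \sum_(i < n.+1) lam i * sig i ^+ 2 <= sup Fs.
    by apply: ub_le_sup => //; exists (lam ord_max).
  have gle : inf Gs <= l - alpha ^+ 2 / s_lu lam u l.
    by apply: ge_inf => //; exists (\sum_(i < n.+1) lam i * sig i ^+ 2).
  have fg : sup Fs <= inf Gs.
    apply: ge_sup; first by exists (\sum_(i < n.+1) lam i * sig i ^+ 2).
    move=> x [sg [hs hsu ->]]; apply: lb_le_inf; first by exists (l - alpha ^+ 2 / s_lu lam u l).
    by move=> y [l' hl' ->]; rewrite -hsu; apply: wd => //; apply: sq1.
  rewrite /sup_part /inf_part -/Fs -/Gs.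
  rewrite ler0_norm; last by rewrite subr_le0.
  rewrite opprB; lra.
apply: ge_sup.
  exists `| sup_part lam u 0 - inf_part lam u (lam ord_max) 0 |; exists 0 => //.
  by rewrite lerN10 ler01.
by move=> z [alpha ha ->]; apply: key.
Qed.
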